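(* For every integer $n\ge 2$ and every nonzero real $x$, $$O_{n}'(x)+\frac{n}{x}O_{n}(x)=\sum_{j=1}^{n-1}O_{j}(x)O_{n-j}(x),$$ where $O_n'$ denotes the derivative of $O_n$ with respect to $x$.
   Context: For a nonzero real number $x$, the Oresme polynomials $O_n(x)$, $n\ge 0$, are defined by $O_{0}(x)=0$, $O_{1}(x)=\frac{1}{x}$, and $O_{n+1}(x)=O_{n}(x)-\frac{1}{x^{2}}O_{n-1}(x)$ for all $n\ge 1$; each $O_n$ is thus a rational function of $x$ (a polynomial in $1/x$), differentiable on $x\neq 0$. *)

(* Defs.v *)
From Stdlib Require Import Reals.
Open Scope R_scope.

Fixpoint oresme (n : nat) (x : R) : R :=
  match n with
  | O => 0
  | S O => / x
  | S ((S m) as k) => oresme k x - / (x ^ 2) * oresme m x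
  end.

(* Main.v *)
Require Import Defs.
From Stdlib Require Import Reals Lra Lia.
Open Scope R_scope.

Lemma dext (f g : R -> R) x l : (forall y, f y = g y) ->
  derivable_pt_lim f x l -> derivable_pt_lim g x l.
Proof.
  intros E H eps He. destruct (H eps He) as [d Hd]. exists d.
  intros h H1 H2. rewrite <- !E. now apply Hd.
Qed.

Definition C (n : nat) (x : R) := sum_f_R0 (fun j => oresme j x * oresme (n - j) x) n.

Lemma orec m x : oresme (S (S m)) x = oresme (S m) x - / (x ^ 2) * oresme m x.
Proof. reflexivity. Qed.

Lemma Crec n x : C (S (S n)) x = C (S n) x - / (x^2) * C n x + / x * oresme (S n) x.
Proof.
  unfold C. rewrite !tech5.
  replace (S (S n) - S (S n))%nat with 0%nat by lia.
  replace (S (S n) - S n)%nat with 1%nat by lia.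
  replace (S n - S n)%nat with 0%nat by lia.
  simpl (oresme 0 x). simpl (oresme 1 x).
  rewrite (sum_eq (fun j => oresme j x * oresme (S (S n) - j) x)
     (fun j => oresme j x * oresme (S n - j) x - (oresme j x * oresme (n - j) x) * / (x^2))).
  2:{ intros i Hi. replace (S (S n) - i)%nat with (S (S (n - i))) by lia.
      replace (S n - i)%nat with (S (n - i)) by lia. rewrite orec. ring. }
  rewrite minus_sum, <- scal_sum. ring.
Qed.

Definition L (n : nat) (x : R) := C n x - INR n * / x * oresme n x.

Lemma dinv x : x <> 0 -> derivable_pt_lim (fun y => / (y ^ 2)) x (- 2 * / x ^ 3).
Proof.
  intro hx.
  assert (H := derivable_pt_lim_div (fun _ => 1) (fun y => y ^ 2) x 0 (INR 2 * x ^ 1)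
     (derivable_pt_lim_const 1 x) (derivable_pt_lim_pow x 2)).
  replace (- 2 * / x ^ 3) with ((0 * x ^ 2 - INR 2 * x ^ 1 * 1) / (x ^ 2)²).
  2:{ unfold Rsqr; simpl; field; auto. }
  eapply dext; [| apply H; apply pow_nonzero; auto].
  intro y. unfold div_fct. unfold Rdiv. ring.
Qed.

Lemma dmain x : x <> 0 -> forall n,
  derivable_pt_lim (oresme n) x (L n x) /\ derivable_pt_lim (oresme (S n)) x (L (S n) x).
Proof.
  intros hx n. induction n as [|n [IH1 IH2]].
  - split.
    + replace (L 0 x) with 0 by (unfold L, C; simpl; ring).
      eapply dext; [| apply (derivable_pt_lim_const 0 x)].
      intro y; reflexivity.
    + assert (H := derivable_pt_lim_div (fun _ => 1) (fun y => y) x 0 1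
         (derivable_pt_lim_const 1 x) (derivable_pt_lim_id x) hx).
      eapply dext in H.
      2:{ intro y. unfold div_fct. simpl. unfold Rdiv. rewrite Rmult_1_l. reflexivity. }
      replace (L 1 x) with ((0 * x - 1 * 1) / x²); auto.
      unfold L, C, Rsqr; simpl; field; auto.
  - split; auto.
    assert (H := derivable_pt_lim_minus _ _ x _ _ IH2
       (derivable_pt_lim_mult _ _ x _ _ (dinv x hx) IH1)).
    eapply dext in H.
    2:{ intro y. unfold minus_fct, mult_fct. rewrite orec. reflexivity. }
    replace (L (S (S n)) x) with
      (L (S n) x - (-2 * / x ^ 3 * oresme n x + / x ^ 2 * L n x)); auto.
    unfold L. rewrite Crec, orec. rewrite !S_INR. field; auto.
Qed.

Theorem mainTheorem12 (n : nat) (x : R) (hn : (2 <= n)%nat) (hx : x <> 0) :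
  exists l : R,
    derivable_pt_lim (oresme n) x l /\
    l + INR n / x * oresme n x =
      sum_f_R0 (fun k => oresme (S k) x * oresme (n - S k) x) (n - 2).
Proof.
  exists (L n x). split. { apply dmain; auto. }
  destruct n as [|[|m]]; try lia.
  replace (S (S m) - 2)%nat with m by lia.
  unfold L, C. rewrite tech5, decomp_sum by lia. simpl pred.
  replace (S (S m) - S (S m))%nat with 0%nat by lia.
  replace (S (S m) - 0)%nat with (S (S m)) by lia.
  simpl (oresme 0 x). unfold Rdiv. ring.
Qed.
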